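(* Let $X$ be a topological space having a well-orderable topological basis (for instance a countable basis). Then $X$ is an approximation space (respectively a convergent approximation space) if and only if player Nonempty has a stationary winning strategy (respectively a stationary convergent winning strategy) in the Choquet game $\mathit{Ch}(X)$.
   Context: Approximation relation: a binary relation $\ll$ on a topological basis $\mathcal{B}$ of $X$ such that for all $U,V,T\in\mathcal{B}$: (1) $U\ll V\Rightarrow V\subseteq U$; (2) $U\subseteq T$ and $U\ll V$ imply $T\ll V$; (3) for every $x\in U$ there is $W\in\mathcal{B}$ with $x\in W$ and $U\ll W$; (4) every sequence $(U_i)_{i\in\mathbb{N}}$ in $\mathcal{B}$ with $U_i\ll U_{i+1}$ for all $i$ has $\bigcap_i U_i\neq\emptyset$. Convergent: (4) strengthened to: every such sequence is a neighborhood basis of some point $x\in\bigcap_iU_i$. (Convergent) approximation space: a space admitting such a relation. Choquet game $\mathit{Ch}(X)$: players Empty and Nonempty alternate for $\omega$ rounds; in round $i$ Empty chooses a pair $(x_i,U_i)$ with $U_i$ open, $x_i\in U_i$, and $U_i\subseteq V_{i-1}$ for $i\ge1$; Nonempty answers with an open $V_i$ with $x_i\in V_i\subseteq U_i$. Nonempty wins iff $\bigcap_i V_i\neq\emptyset$. A winning strategy for Nonempty is stationary if the move depends only on the last move $(x_i,U_i)$ of Empty; it is convergent if in every play following it the sets $V_i$ form a neighborhood basis of some point of $\bigcap_iV_i$. *)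

(* Defs.v *)
From Stdlib Require Import Classical.

Set Implicit Arguments.

Definition subset {X : Type} (A B : X -> Prop) : Prop := forall x, A x -> B x.

Record topology (X : Type) : Type := Topology {
  is_open : (X -> Prop) -> Prop;
  open_full : is_open (fun _ => True);
  open_inter : forall U V, is_open U -> is_open V ->
                 is_open (fun x => U x /\ V x);
  open_union : forall F : (X -> Prop) -> Prop,
                 (forall U, F U -> is_open U) ->
                 is_open (fun x => exists U, F U /\ U x)
}.

Definition is_basis {X : Type} (T : topology X) (B : (X -> Prop) -> Prop) : Prop :=
  (forall U, B U -> is_open T U) /\
  (forall W x, is_open T W -> W x -> exists U, B U /\ U x /\ subset U W).

Definition well_orderable {X : Type} (B : (X -> Prop) -> Prop) : Prop :=
  exists R : (X -> Prop) -> (X -> Prop) -> Prop,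
    (forall U, B U -> ~ R U U) /\
    (forall U V W, B U -> B V -> B W -> R U V -> R V W -> R U W) /\
    (forall U V, B U -> B V -> R U V \/ U = V \/ R V U) /\
    (forall P : (X -> Prop) -> Prop, (exists U, B U /\ P U) ->
       exists U, B U /\ P U /\ forall V, B V -> P V -> ~ R V U).

Definition nbhd_basis_at {X : Type} (T : topology X) (V : nat -> X -> Prop) (y : X) : Prop :=
  forall W, is_open T W -> W y -> exists i, subset (V i) W.

(* Axioms (1)-(3) of an approximation relation on the basis B. *)
Definition approx_rel_base {X : Type} (T : topology X) (B : (X -> Prop) -> Prop)
    (ll : (X -> Prop) -> (X -> Prop) -> Prop) : Prop :=
  is_basis T B /\
  (forall U V, B U -> B V -> ll U V -> subset V U) /\
  (forall U V T', B U -> B V -> B T' -> subset U T' -> ll U V -> ll T' V) /\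
  (forall U x, B U -> U x -> exists W, B W /\ W x /\ ll U W).

Definition approx_rel {X : Type} (T : topology X) (B : (X -> Prop) -> Prop)
    (ll : (X -> Prop) -> (X -> Prop) -> Prop) : Prop :=
  approx_rel_base T B ll /\
  (forall Us : nat -> X -> Prop, (forall i, B (Us i)) ->
     (forall i, ll (Us i) (Us (S i))) -> exists x, forall i, Us i x).

Definition conv_approx_rel {X : Type} (T : topology X) (B : (X -> Prop) -> Prop)
    (ll : (X -> Prop) -> (X -> Prop) -> Prop) : Prop :=
  approx_rel_base T B ll /\
  (forall Us : nat -> X -> Prop, (forall i, B (Us i)) ->
     (forall i, ll (Us i) (Us (S i))) ->
     exists x, (forall i, Us i x) /\ nbhd_basis_at T Us x).

Definition approximation_space {X : Type} (T : topology X) : Prop :=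
  exists B ll, approx_rel T B ll.

Definition convergent_approximation_space {X : Type} (T : topology X) : Prop :=
  exists B ll, conv_approx_rel T B ll.

(* Choquet game Ch(X).  A stationary strategy for Nonempty answers Empty's
   last move (x, U) with sigma x U; it must be a legal move. *)
Definition stationary_strategy {X : Type} (T : topology X)
    (sigma : X -> (X -> Prop) -> (X -> Prop)) : Prop :=
  forall x U, is_open T U -> U x ->
    is_open T (sigma x U) /\ sigma x U x /\ subset (sigma x U) U.

(* A play following sigma: Empty's moves (xs i, Us i) are legal, and
   Nonempty answers V_i = sigma (xs i) (Us i). *)
Definition play_following {X : Type} (T : topology X)
    (sigma : X -> (X -> Prop) -> (X -> Prop))
    (xs : nat -> X) (Us : nat -> X -> Prop) : Prop :=
  (forall i, is_open T (Us i) /\ Us i (xs i)) /\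
  (forall i, subset (Us (S i)) (sigma (xs i) (Us i))).

Definition stationary_winning {X : Type} (T : topology X)
    (sigma : X -> (X -> Prop) -> (X -> Prop)) : Prop :=
  stationary_strategy T sigma /\
  forall xs Us, play_following T sigma xs Us ->
    exists y, forall i, sigma (xs i) (Us i) y.

Definition stationary_convergent_winning {X : Type} (T : topology X)
    (sigma : X -> (X -> Prop) -> (X -> Prop)) : Prop :=
  stationary_strategy T sigma /\
  forall xs Us, play_following T sigma xs Us ->
    exists y, (forall i, sigma (xs i) (Us i) y) /\
              nbhd_basis_at T (fun i => sigma (xs i) (Us i)) y.

(* Main.v *)
Require Import Defs.
From Stdlib Require Import Classical ClassicalEpsilon.

Section S.
Variables (X : Type) (T : topology X).

Lemma dir1 (B : (X -> Prop) -> Prop) ll : approx_rel_base T B ll ->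
  exists sigma, stationary_strategy T sigma /\
   forall xs Us, play_following T sigma xs Us ->
     (forall i, B (sigma (xs i) (Us i))) /\
     (forall i, ll (sigma (xs i) (Us i)) (sigma (xs (S i)) (Us (S i)))).
Proof.
  intros [[Bo Bb] [H1 [H2 H3]]].
  assert (H : forall x U, {W | is_open T U -> U x -> B W /\ W x /\ subset W U /\
        exists W0, B W0 /\ subset W0 U /\ ll W0 W}).
  { intros x U. apply constructive_indefinite_description.
    destruct (classic (is_open T U /\ U x)) as [[Uo Ux]|Hn].
    - destruct (Bb U x Uo Ux) as [W0 [BW0 [W0x W0U]]].
      destruct (H3 W0 x BW0 W0x) as [W [BW [Wx llW]]].
      exists W. intros _ _. split; [exact BW|]. split; [exact Wx|]. split.
      + intros y Wy. apply W0U. exact (H1 W0 W BW0 BW llW y Wy).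
      + exists W0. auto.
    - exists U. intros a b. exfalso. auto. }
  exists (fun x U => proj1_sig (H x U)). split.
  - intros x U Uo Ux. destruct (proj2_sig (H x U) Uo Ux) as [BW [Wx [WU _]]].
    auto.
  - intros xs Us [P1 P2].
    assert (HB : forall i, B (proj1_sig (H (xs i) (Us i)))).
    { intro i. destruct (P1 i). apply (proj2_sig (H (xs i) (Us i))); auto. }
    split; [exact HB|].
    intro i. destruct (P1 (S i)) as [o x].
    destruct (proj2_sig (H (xs (S i)) (Us (S i))) o x) as [BW [Wx [WU [W0 [BW0 [W0U ll0]]]]]].
    apply (H2 W0); auto.
    intros y Hy. apply P2. apply W0U. exact Hy.
Qed.

Definition llS (sigma : X -> (X -> Prop) -> (X -> Prop)) (U V : X -> Prop) : Prop :=
  exists x U', is_open T U' /\ U' x /\ subset U' U /\ subset V (sigma x U').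

Lemma dir2_base B sigma : is_basis T B -> stationary_strategy T sigma ->
  approx_rel_base T B (llS sigma).
Proof.
  intros [Bo Bb] Hs. split; [split; auto|]. split; [|split].
  - intros U V BU BV [x [U' [o [x' [sU sV]]]]] y Vy.
    apply sU. destruct (Hs x U' o x') as [_ [_ ss]]. apply ss. apply sV. exact Vy.
  - intros U V T' BU BV BT sUT [x [U' [o [x' [sU sV]]]]].
    exists x, U'. split; [exact o|]. split; [exact x'|]. split; [|exact sV].
    intros y Hy. apply sUT, sU, Hy.
  - intros U x BU Ux.
    destruct (Hs x U (Bo U BU) Ux) as [so [sx ss]].
    destruct (Bb _ x so sx) as [W [BW [Wx WU]]].
    exists W. split; auto. split; auto. exists x, U.
    split; [apply Bo; auto|]. split; [exact Ux|]. split; [intros y Hy; exact Hy|exact WU].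
Qed.

Lemma dir2_chain sigma : stationary_strategy T sigma ->
  forall Us : nat -> X -> Prop, (forall i, llS sigma (Us i) (Us (S i))) ->
  exists xs Us', play_following T sigma xs Us' /\
    forall i, subset (Us (S i)) (sigma (xs i) (Us' i)) /\
              subset (sigma (xs i) (Us' i)) (Us i).
Proof.
  intros Hs Us Hc.
  assert (f : forall i, {p : X * (X -> Prop) | is_open T (snd p) /\ snd p (fst p) /\
        subset (snd p) (Us i) /\ subset (Us (S i)) (sigma (fst p) (snd p))}).
  { intro i. apply constructive_indefinite_description.
    destruct (Hc i) as [x [U' H]]. exists (x, U'). exact H. }
  exists (fun i => fst (proj1_sig (f i))), (fun i => snd (proj1_sig (f i))).
  split; [split|].
  - intro i. destruct (proj2_sig (f i)) as [a [b _]]. auto.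
  - intros i y Hy. destruct (proj2_sig (f (S i))) as [_ [_ [c _]]].
    destruct (proj2_sig (f i)) as [_ [_ [_ d]]]. apply d, c, Hy.
  - intro i. destruct (proj2_sig (f i)) as [a [b [c d]]]. split; auto.
    destruct (Hs _ _ a b) as [_ [_ e]]. intros y Hy. apply c, e, Hy.
Qed.

End S.

Theorem theorem3p9 (X : Type) (T : topology X)
  (hB : exists B : (X -> Prop) -> Prop, is_basis T B /\ well_orderable B) :
  (approximation_space T <->
     exists sigma, stationary_winning T sigma) /\
  (convergent_approximation_space T <->
     exists sigma, stationary_convergent_winning T sigma).
Proof.
  destruct hB as [B [HB _]].
  split; split.
  - intros [B' [ll [Hb H4]]].
    destruct (@dir1 X T B' ll Hb) as [sigma [Hs Hp]]. exists sigma. split; auto.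
    intros xs Us Hpl. destruct (Hp xs Us Hpl) as [a b].
    exact (H4 (fun i => sigma (xs i) (Us i)) a b).
  - intros [sigma [Hs Hw]]. exists B, (@llS X T sigma). split.
    + apply dir2_base; auto.
    + intros Us _ Hc. destruct (@dir2_chain X T sigma Hs Us Hc) as [xs [Us' [Hp Hsub]]].
      destruct (Hw xs Us' Hp) as [y Hy]. exists y. intro i.
      apply (proj2 (Hsub i)). apply Hy.
  - intros [B' [ll [Hb H4]]].
    destruct (@dir1 X T B' ll Hb) as [sigma [Hs Hp]]. exists sigma. split; auto.
    intros xs Us Hpl. destruct (Hp xs Us Hpl) as [a b].
    exact (H4 (fun i => sigma (xs i) (Us i)) a b).
  - intros [sigma [Hs Hw]]. exists B, (@llS X T sigma). split.
    + apply dir2_base; auto.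
    + intros Us _ Hc. destruct (@dir2_chain X T sigma Hs Us Hc) as [xs [Us' [Hp Hsub]]].
      destruct (Hw xs Us' Hp) as [y [Hy Hn]]. exists y. split.
      * intro i. apply (proj2 (Hsub i)). apply Hy.
      * intros W Wo Wy. destruct (Hn W Wo Wy) as [i Hi]. exists (S i).
        intros z Hz. apply Hi. apply (proj1 (Hsub i)). exact Hz.
Qed.
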